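(* For any index $\mathbf{k}$, the element $w_{\hbar}^{\mathcal{S}, \ast}(g_{\mathbf{k}})$ belongs to the $\mathbb{Z}$-submodule $\bigoplus_{\mathbf{l} \in I_{0}}\mathbb{Z}\,g_{\mathbf{l}}$ of $\mathcal C\langle A\rangle$, where $I_0$ is the set of admissible indices.
   Context: Indices: an index is a finite (possibly empty) tuple $\mathbf k=(k_1,\dots,k_r)$ of positive integers; admissible if empty or $k_r\ge2$. Let $\mathcal{C}=\mathbb{Q}[\hbar]$ ($\hbar$ formal), $\mathfrak{H}=\mathcal{C}\langle a,b\rangle$. For $k\ge1$, $g_k=ba^k$; $g_{\mathbf k}=g_{k_1}\cdots g_{k_r}$, $g_\varnothing=1$. $A=\{\hbar b\}\cup\{ba^k\mid k\ge1\}$, $\mathcal{C}\langle A\rangle$ the $\mathcal{C}$-subalgebra generated by $1$ and $A$, $\mathfrak z$ the $\mathcal C$-span of $A$. Harmonic product: $\circ_\hbar$ symmetric $\mathcal C$-bilinear on $\mathfrak z$ with $(\hbar b)\circ_\hbar(\hbar b)=\hbar\cdot\hbar b$, $(\hbar b)\circ_\hbar g_k=\hbar g_k$, $g_k\circ_\hbar g_l=g_{k+l}$; $\ast_\hbar$ on $\mathcal{C}\langle A\rangle$: $w\ast_\hbar1=1\ast_\hbar w=w$, $(wu)\ast_\hbar(w'v)=(w\ast_\hbar w'v)u+(wu\ast_\hbar w')v+(w\ast_\hbar w')(u\circ_\hbar v)$ ($u,v\in A$). $\psi^\ast$ is the $\mathcal C$-algebra anti-involution of $\mathcal C\langle A\rangle$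 with $\psi^\ast(\hbar b)=\hbar b$, $\psi^\ast(ba^k)=b(-a)^k$ ($k\ge1$). $w^{\mathcal S,\ast}_\hbar$ is the $\mathcal C$-linear map with $w^{\mathcal S,\ast}_\hbar(1)=1$, $w^{\mathcal S,\ast}_\hbar(u_1\cdots u_r)=\sum_{i=0}^r(u_1\cdots u_i)\ast_\hbar\psi^\ast(u_{i+1}\cdots u_r)$ for $u_j\in A$. *)

(* Defs.v *)
From mathcomp Require Import all_boot all_order all_algebra.
Set Implicit Arguments. Unset Strict Implicit. Unset Printing Implicit Defensive.
Import Order.TTheory GRing.Theory Num.Theory.
Local Open Scope ring_scope.

Definition C := {poly rat}.
Definition hbar : C := 'X.

(* Letters of the alphabet A: 0 stands for hbar*b, k >= 1 stands for g_k = b a^k. *)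
Definition letter := nat.
Definition Aword := seq letter.
(* Elements of C<A> as formal finite C-linear combinations of A-words
   (C<A> is freely generated by A as a C-algebra). *)
Definition Aelt := seq (C * Aword).

Definition scaleA (c : C) (x : Aelt) : Aelt := [seq (c * p.1, p.2) | p <- x].

Definition circ (u v : letter) : C * letter :=
  match u, v with
  | 0%N, 0%N => (hbar, 0%N)
  | 0%N, l => (hbar, l)
  | k, 0%N => (hbar, k)
  | k, l => (1, (k + l)%N)
  end.

(* Harmonic product of two A-words, computed on REVERSED words
   (head of the list = last letter), following the recursion
   (wu)*(w'v) = (w * w'v)u + (wu * w')v + (w * w')(u o v). *)
Fixpoint harm_rev (s : Aword) : Aword -> Aelt :=
  match s with
  | [::] => fun t => [:: (1, t)]
  | x :: s' =>
      fix harm_t (t : Aword) : Aelt :=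
        match t with
        | [::] => [:: (1, x :: s')]
        | y :: t' =>
            [seq (p.1, x :: p.2) | p <- harm_rev s' (y :: t')]
            ++ [seq (p.1, y :: p.2) | p <- harm_t t']
            ++ [seq (p.1 * (circ x y).1, (circ x y).2 :: p.2) | p <- harm_rev s' t']
        end
  end.

Definition harm (u v : Aword) : Aelt :=
  [seq (p.1, rev p.2) | p <- harm_rev (rev u) (rev v)].

Definition harmE (x y : Aelt) : Aelt :=
  flatten [seq flatten [seq scaleA (p.1 * q.1) (harm p.2 q.2) | q <- y] | p <- x].

(* psi^*: anti-automorphism with psi(hbar b) = hbar b, psi(b a^k) = b(-a)^k = (-1)^k b a^k. *)
Definition psi_word (u : Aword) : C * Aword :=
  ((-1) ^+ (sumn u), rev u).

Definition wS (u : Aword) : Aelt :=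
  flatten [seq scaleA (psi_word (drop i u)).1
                      (harm (take i u) (psi_word (drop i u)).2)
          | i <- iota 0 (size u).+1].

(* Embedding C<A> -> H = C<a,b>.  Words in {a,b}: true = b, false = a. *)
Definition abword := seq bool.
Definition letter_ab (u : letter) : abword := true :: nseq u false.
Definition Aword_ab (u : Aword) : abword := flatten (map letter_ab u).
(* power of hbar carried by an A-word: one per occurrence of hbar b *)
Definition hbar_pow (u : Aword) : nat := count (pred1 0%N) u.

Definition coefH (x : Aelt) (w : abword) : C :=
  \sum_(p <- x | Aword_ab p.2 == w) p.1 * hbar ^+ hbar_pow p.2.

Definition is_index (k : seq nat) : bool := all (fun x => 0 < x)%N k.
Definition admissible (k : seq nat) : bool :=
  is_index k && ((k == [::]) || (1 < last 0%N k)%N).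
Definition g_ab (k : seq nat) : abword := Aword_ab k.

(* Main.v *)
Require Import Defs.
From mathcomp Require Import all_boot all_order all_algebra.
Import GRing.Theory.
Local Open Scope ring_scope.

Definition cf (x : Aelt) (v : Aword) : C := \sum_(p <- x | p.2 == v) p.1.
Definition posw (v : Aword) := all (fun n => 0 < n)%N v.

Lemma cf_cat x y v : cf (x ++ y) v = cf x v + cf y v.
Proof. by rewrite /cf big_cat. Qed.

Lemma cf_scale c x v : cf (scaleA c x) v = c * cf x v.
Proof. by rewrite /cf big_map mulr_sumr. Qed.

Lemma cf_flatten L v : cf (flatten L) v = \sum_(l <- L) cf l v.
Proof.
elim: L => [|l L IH]; first by rewrite /cf !big_nil.
by rewrite /= cf_cat IH big_cons.
Qed.

Lemma cf_map_cons (f : C -> C) x l y z :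
  cf [seq (f p.1, x :: p.2) | p <- l] (y :: z) =
  if x == y then \sum_(p <- l | p.2 == z) f p.1 else 0.
Proof.
rewrite /cf big_map /=. case: eqP => [->|ne].
- by apply: eq_bigl => p; rewrite eqseq_cons eqxx.
- by rewrite big_pred0 // => p; rewrite eqseq_cons; case: eqP.
Qed.

Lemma hr_cons x s y t : harm_rev (x :: s) (y :: t) =
  [seq (p.1, x :: p.2) | p <- harm_rev s (y :: t)]
  ++ [seq (p.1, y :: p.2) | p <- harm_rev (x :: s) t]
  ++ [seq (p.1 * (circ x y).1, (circ x y).2 :: p.2) | p <- harm_rev s t].
Proof. by []. Qed.
Lemma hr_nil_l t : harm_rev [::] t = [:: (1, t)].
Proof. by []. Qed.
Lemma hr_nil_r s : harm_rev s [::] = [:: (1, s)].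
Proof. by case: s. Qed.
Lemma circ_pos x y : (0 < x)%N -> (0 < y)%N -> circ x y = (1, (x + y)%N).
Proof. by case: x => // x; case: y. Qed.

Lemma hr_props s t : posw s -> posw t ->
  all (fun p => (p.1 == 1) && posw p.2) (harm_rev s t).
Proof.
elim: s t => [|x s IHs] t.
  by move=> _ Ht; rewrite hr_nil_l /= eqxx andbT.
elim: t => [|y t IHt].
  by move=> Hs _; rewrite hr_nil_r /= eqxx andbT.
rewrite hr_cons => /andP [Hx Hs] /andP [Hy Ht]; change (is_true (posw s)) in Hs; change (is_true (posw t)) in Ht.
have Hyt : posw (y :: t) by rewrite /= Hy.
have Hxs : posw (x :: s) by rewrite /= Hx.
rewrite (circ_pos _ _ Hx Hy) !all_cat !all_map.
apply/and3P; split; apply/allP => p /=.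
- by move=> /(allP (IHs _ Hs Hyt)) /andP [-> ->]; rewrite Hx.
- by move=> /(allP (IHt Hxs Ht)) /andP [-> ->]; rewrite Hy.
- move=> /(allP (IHs _ Hs Ht)) /andP [/eqP -> ->].
  by rewrite mulr1 eqxx addn_gt0 Hx.
Qed.

Lemma hr_cf1 s t z : posw s -> posw t ->
  cf (harm_rev s t) (1%N :: z) =
  (if s is x :: s' then (if x == 1%N then cf (harm_rev s' t) z else 0) else 0) +
  (if t is y :: t' then (if y == 1%N then cf (harm_rev s t') z else 0) else 0).
Proof.
case: s => [|x s]; case: t => [|y t].
- by rewrite hr_nil_l => _ _; rewrite /cf big_cons big_nil add0r.
- rewrite !hr_nil_l => _ _; rewrite add0r /cf !big_cons !big_nil /= eqseq_cons.
  by case: (y == 1%N).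
- rewrite !hr_nil_r => _ _; rewrite addr0 /cf !big_cons !big_nil /= eqseq_cons.
  by case: (x == 1%N).
rewrite hr_cons.
move=> /andP [Hx Hs] /andP [Hy Ht].
rewrite (circ_pos _ _ Hx Hy) !cf_cat.
rewrite (cf_map_cons (fun c => c)) (cf_map_cons (fun c => c)).
rewrite (cf_map_cons (fun c => c * 1)).
have -> : ((x + y)%N == 1%N) = false.
  by case: x Hx => // x _; case: y Hy => // y _; rewrite addSn addnS.
by rewrite addr0.
Qed.

Lemma cf_harm u w v : cf (harm u w) v = cf (harm_rev (rev u) (rev w)) (rev v).
Proof.
rewrite /cf /harm big_map /=; apply: eq_bigl => p /=.
by rewrite -{1}(revK v) (can_eq (@revK _)).
Qed.

Lemma cf_wS k v : cf (wS k) v =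
  \sum_(i <- iota 0 (size k).+1)
     (-1) ^+ (sumn (drop i k)) * cf (harm_rev (rev (take i k)) (drop i k)) (rev v).
Proof.
rewrite /wS cf_flatten big_map; apply: eq_bigr => i _.
by rewrite cf_scale cf_harm /psi_word /= revK.
Qed.

Lemma tele q a z : posw q -> posw a ->
  \sum_(i <- iota 0 (size q).+1)
    (-1) ^+ (sumn (drop i q)) * cf (harm_rev (rev (take i q) ++ a) (drop i q)) (1%N :: z)
  = (-1) ^+ (sumn q) *
    (if a is x :: a' then (if x == 1%N then cf (harm_rev a' q) z else 0) else 0).
Proof.
elim: q a => [|y q IH] a Hq Ha.
  by rewrite /= big_cons big_nil hr_cf1 // addr0 addr0.
have -> : iota 0 (size (y :: q)).+1 = 0%N :: [seq i.+1 | i <- iota 0 (size q).+1].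
  have E n : iota 1 n = [seq i.+1 | i <- iota 0 n].
    by rewrite (iotaDl 1 0); apply: eq_map => i; rewrite add1n.
  by rewrite -E.
rewrite big_cons big_map.
rewrite (eq_bigr (fun i => (-1) ^+ (sumn (drop i q)) *
    cf (harm_rev (rev (take i q) ++ y :: a) (drop i q)) (1%N :: z))); last first.
  by move=> i _; rewrite /= rev_cons cat_rcons.
move: Hq => /= /andP [Hy Hq].
rewrite IH //; last by rewrite /= Hy Ha.
rewrite hr_cf1 //=; last by rewrite Hy.
rewrite mulrDr -addrA -[RHS]addr0; congr (_ + _).
case: eqP => [->|_]; last by rewrite !mulr0 addr0.
by rewrite add1n exprS mulN1r mulNr addNr.
Qed.

Lemma wS_cf1 k z : posw k -> cf (wS k) (rcons z 1%N) = 0.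
Proof.
move=> Hk; rewrite cf_wS rev_rcons.
have := @tele k [::] (rev z) Hk (isT : posw [::]); rewrite /= mulr0 => H; apply: (eq_trans _ H).
by apply: eq_bigr => i _; rewrite cats0.
Qed.

Lemma wS_props k : posw k ->
  all (fun p => ((p.1 == 1) || (p.1 == -1)) && posw p.2) (wS k).
Proof.
move=> Hk; apply/allP => p /flatten_mapP [i _].
rewrite /psi_word /= => /mapP [q + ->] /=.
rewrite /harm => /mapP [r Hr ->] /=.
have Hpos : forall l, posw l -> posw (rev l) by move=> l; rewrite /posw all_rev.
have Htk : posw (take i k).
  by apply/allP => n /mem_take /(allP Hk).
have Hdk : posw (drop i k).
  by apply/allP => n /mem_drop /(allP Hk).
have /andP [/eqP -> H2] := allP (@hr_props _ _ (Hpos _ Htk) (Hpos _ (Hpos _ Hdk))) r Hr.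
rewrite Hpos // andbT mulr1 -signr_odd.
by case: (odd _); rewrite ?expr1 ?expr0 eqxx ?orbT.
Qed.

Lemma nonadm v : posw v -> ~~ admissible v -> exists z, v = rcons z 1%N.
Proof.
case/lastP: v => [|z n]; first by [].
rewrite /admissible => Hp.
have -> : is_index (rcons z n) by exact: Hp.
rewrite /= last_rcons.
move: Hp; rewrite /posw all_rcons => /andP [Hn _].
have -> : (rcons z n == [::]) = false by case: z.
by case: n Hn => [|[|n]] // _ _; exists z.
Qed.

Definition headOK (X : abword) := head true X.

Lemma nseq_app_inj a b X Y : headOK X -> headOK Y ->
  nseq a false ++ X = nseq b false ++ Y -> a = b /\ X = Y.
Proof.
elim: a b => [|a IH] [|b] //=.
- by move=> hX hY E; rewrite E in hX.
- by move=> hX hY E; rewrite -E in hY.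
- by move=> hX hY [] /(IH _ hX hY) [-> ->].
Qed.

Lemma headOK_ab l : headOK (Aword_ab l).
Proof. by case: l. Qed.

Lemma Aword_ab_inj : injective Aword_ab.
Proof.
elim=> [|a l IH] [|b m] //=.
move=> [] /(@nseq_app_inj _ _ _ _ (headOK_ab l) (headOK_ab m)) [-> /IH ->].
by [].
Qed.

Lemma m1_neq1 : ((-1 : C) == 1) = false.
Proof.
apply/eqP => h; have := congr1 (fun q : C => q`_0) h.
by rewrite /= coefN coef1.
Qed.

Theorem proposition5p1 (k : seq nat) :
  is_index k ->
  exists s : seq (int * seq nat),
    all (fun p => admissible p.2) s /\
    forall w : abword,
      coefH (wS k) w = \sum_(p <- s | g_ab p.2 == w) ((p.1)%:~R : C).
Proof.
move=> Hk; have Hk' : posw k by exact: Hk.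
have Hx := @wS_props k Hk'.
have H0 := fun z => @wS_cf1 k z Hk'.
set x := wS k in Hx H0 *.
exists [seq ((if p.1 == 1 then 1 else -1 : int), p.2) | p <- x & admissible p.2].
split.
  by apply/allP => p /mapP [q]; rewrite mem_filter => /andP [Ha _] ->.
move=> w; rewrite big_map big_filter_cond /coefH.
rewrite (bigID (fun p => admissible p.2)) /=.
have Hterm : forall p, p \in x ->
    p.1 * hbar ^+ hbar_pow p.2 = ((if p.1 == 1 then 1 else -1 : int)%:~R : C).
  move=> p px; have /andP [H1 H2] := allP Hx p px.
  have : ~~ has (pred1 0%N) p.2 by apply/hasPn => n /(allP H2); case: n.
  rewrite has_count -eqn0Ngt /hbar_pow => /eqP -> ; rewrite expr0 mulr1.
  by case/orP: H1 => /eqP ->; rewrite ?eqxx ?m1_neq1 ?mulrN1z.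
have -> : \sum_(p <- x | (Aword_ab p.2 == w) && ~~ admissible p.2)
            p.1 * hbar ^+ hbar_pow p.2 = 0.
  case: (boolP (has (fun p => (Aword_ab p.2 == w) && ~~ admissible p.2) x)); last first.
    by move=> hn; rewrite big_hasC.
  move=> /hasP [p0 p0x /andP [/eqP Hw Hna]].
  have /andP [_ Hp0] := allP Hx p0 p0x.
  have [z Hz] := @nonadm _ Hp0 Hna.
  apply: (eq_trans _ (H0 z)); rewrite /cf big_seq_cond [RHS]big_seq_cond.
  apply: eq_big => p.
    case px: (p \in x) => //=.
    apply/idP/idP.
      by move=> /andP [/eqP]; rewrite -Hw => /Aword_ab_inj ->; rewrite Hz.
    by move=> /eqP ->; rewrite -Hz Hw eqxx Hna.
  move=> /andP [px _]; rewrite Hterm //.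
  by have /andP [/orP [] /eqP -> _] := allP Hx p px; rewrite ?eqxx ?m1_neq1 ?mulrN1z.
rewrite addr0 big_seq_cond [RHS]big_seq_cond.
apply: eq_big => p; last by move=> /andP [px _]; rewrite Hterm.
by rewrite /g_ab; case: (p \in x); case: (admissible p.2); case: (Aword_ab p.2 == w).
Qed.
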